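(* Let $G$ be a finite primitive monolithic soluble group, let $N=\operatorname{soc}(G)$ and let $H$ be a core-free maximal subgroup of $G$. Given $1\neq h\in H$ and $n\in N$, we have $hn\in V(G)$ if and only if $h\in V(H)$.
   Context: For a finite group $X$, $V(X)$ is the set of elements $x\in X$ such that $X=\langle x,y\rangle$ for some $y\in X$. A primitive monolithic group is one having a core-free maximal subgroup and a unique minimal normal subgroup. *)

(* Defs.v *)
From mathcomp Require Import all_boot all_fingroup all_solvable.
Set Implicit Arguments. Unset Strict Implicit. Unset Printing Implicit Defensive.
Local Open Scope group_scope.

Definition minnormal_sub (gT : finGroupType) (M G : {set gT}) : bool :=
  minnormal M G && (M \subset G).

Definition soc (gT : finGroupType) (G : {set gT}) : {set gT} :=
  << \bigcup_(M : {group gT} | minnormal_sub M G) M >>.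

Definition core_free (gT : finGroupType) (H G : {set gT}) : bool :=
  (H \subset G) && (gcore H G == 1).

Definition primitive_monolithic (gT : finGroupType) (G : {group gT}) : Prop :=
  (exists H : {group gT}, maximal H G /\ core_free H G) /\
  (exists N : {group gT}, minnormal_sub N G /\
     forall M : {group gT}, minnormal_sub M G -> M = N).

Definition Vgen (gT : finGroupType) (X : {set gT}) : {set gT} :=
  [set x in X | [exists y in X, << [set x; y] >> == X]].

(* Main.v *)
Require Import Defs.
From mathcomp Require Import all_boot all_fingroup all_solvable.
Set Implicit Arguments. Unset Strict Implicit. Unset Printing Implicit Defensive.
Local Open Scope group_scope.

Lemma basic_facts (gT : finGroupType) (G H N : {group gT}) :
  N \subset G -> minnormal N G -> abelian N ->
  maximal H G -> gcore H G = 1 ->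
  [/\ N * H = G, H :&: N = 1 & 'C_H(N) = 1].
Proof.
move=> sNG minN abN maxH cfH.
have [/andP[ntN nNG] minN'] := mingroupP minN.
have [prHG maxH'] := maxgroupP maxH.
have sHG : H \subset G := proper_sub prHG.
have nNH : H \subset 'N(N) := subset_trans sHG nNG.
have trivcore : forall X : {group gT}, X \subset H -> G \subset 'N(X) -> X :=: 1.
  move=> X sXH nXG; apply/trivgP; rewrite -cfH; exact: gcore_max.
have nsNH : ~~ (N \subset H).
  apply/negP=> sNH; move/negP: ntN; apply; apply/eqP; exact: trivcore.
have NHG : N * H = G.
  rewrite -norm_joinEr //.
  apply/eqP; rewrite eqEproper join_subG sNG sHG /=.
  apply/negP=> prJ; have := maxH' _ prJ (joing_subr N H).
  move=> eqJ; move/negP: nsNH; apply; rewrite -eqJ; exact: joing_subl.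
have nGN : forall X : {set gT}, H \subset 'N(X) -> N \subset 'N(X) -> G \subset 'N(X).
  move=> X nXH nXN; rewrite -NHG; exact: mul_subG.
split=> //.
  apply: trivcore; first exact: subsetIl.
  apply: nGN; first by rewrite normsI ?normG.
  apply: cents_norm; rewrite centsC; exact: subset_trans (subsetIr H N) abN.
apply: trivcore; first exact: subsetIl.
apply: nGN; first by rewrite normsI ?normG ?norms_cent.
apply: cents_norm; rewrite centsC; exact: subsetIr.
Qed.
Lemma conj_compl (gT : finGroupType) (G H N K : {group gT}) :
  solvable G -> N \subset G -> minnormal N G -> abelian N ->
  maximal H G -> H :!=: 1 ->
  N * H = G -> H :&: N = 1 -> 'C_H(N) = 1 ->
  K \subset G -> K :&: N = 1 -> N * K = G ->
  exists2 m, m \in N & K :=: H :^ m.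
Proof.
move=> solG sNG minN abN maxH ntH NHG tiHN cHN sKG tiKN NKG.
have [/andP[ntN nNG] minN'] := mingroupP minN.
have [prHG maxH'] := maxgroupP maxH.
have sHG : H \subset G := proper_sub prHG.
have nNH : H \subset 'N(N) := subset_trans sHG nNG.
have [A minA sAH] := minnormal_exists ntH (normG H).
have [nAH ntA /is_abelemP [q q_pr abA]] := minnormal_solvable minA sAH (solvableS sHG solG).
have [_ _ /is_abelemP [p p_pr abN']] := minnormal_solvable minN sNG solG.
have nNA : A \subset 'N(N) := subset_trans sAH nNH.
have tiNA : N :&: A = 1.
  apply/trivgP; rewrite -tiHN (setIC H); exact: setIS.
have cAN1 : A \subset 'C(N) -> False.
  move=> cAN; move/negP: ntA; apply; apply/eqP/trivgP; rewrite -cHN subsetI sAH; exact: cAN.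
pose NA := (N <*> A)%G.
have NAE : NA :=: N * A by rewrite /= norm_joinEr.
have nNAG : G \subset 'N(NA).
  rewrite -NHG mul_subG //.
    exact: subset_trans (joing_subl N A) (normG NA).
  by rewrite /= norm_joinEr // normsM.
have qp : q != p.
  apply/negP=> /eqP qp; subst q.
  have pNA : p.-group NA by rewrite NAE pgroupM !abelem_pgroup.
  have sNNA : N \subset NA := joing_subl N A.
  have := nil_comm_properl (pgroup_nil pNA) sNNA ntN (A:=NA).
  rewrite subsetI subxx.
  have nNNA : NA \subset 'N(N) by rewrite join_subG normG.
  rewrite nNNA => /(_ isT) prC.
  have sCN : [~: N, NA] \subset N by rewrite commg_subl.
  have nCG : G \subset 'N([~: N, NA]) by rewrite normsR.
  case: (eqVneq [~: N, NA] 1) => [C1 | ntC].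
    apply: cAN1; apply: subset_trans (joing_subr N A) _.
    by rewrite centsC; apply/commG1P.
  have := minN' [~: N, NA]%G; rewrite /= ntC nCG => /(_ isT sCN) eqC.
  by move: prC; rewrite eqC properxx.
have coNA : coprime #|N| #|A|.
  apply: (@pnat_coprime p); first exact: abelem_pgroup abN'.
  apply: (pi_pnat (p:=q)); first exact: abelem_pgroup abA.
  by rewrite !inE.
pose K1 := (K :&: NA)%G.
have sNNA : N \subset NA := joing_subl N A.
have NK1 : N * K1 = NA.
  by rewrite /= group_modl // NKG; apply/setIidPr; rewrite join_subG sNG (subset_trans sAH sHG).
have tiNK1 : N :&: K1 = 1.
  by apply/trivgP; rewrite -tiKN setIC /=; apply: setIS; exact: subsetIl.
have oK1 : #|K1| = #|A|.
  have e1 := TI_cardMg tiNK1; have e2 := TI_cardMg tiNA.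
  rewrite NK1 NAE e2 in e1.
  by apply/eqP; rewrite -(eqn_pmul2l (cardG_gt0 N)) e1.
have sK1NA : K1 \subset N * A by rewrite -NAE subsetIr.
have [x Nx K1E] := SchurZassenhaus_trans_sol (abelian_sol abN) nNA sK1NA coNA oK1.
exists x => //.
have nK1K : K \subset 'N(K1) by rewrite normsI ?normG // (subset_trans sKG nNAG).
have NGA : 'N_G(A) = H.
  have sHN : H \subset 'N_G(A) by rewrite subsetI sHG nAH.
  case: (eqVneq 'N_G(A) G) => [NGAE | neNG].
    exfalso; apply: cAN1.
    have nAN : N \subset 'N(A) by rewrite (subset_trans sNG) // -NGAE subsetIr.
    apply/commG1P; apply/trivgP; rewrite -tiNA setIC commg_subI //.
      by rewrite subsetI subxx.
    by rewrite subsetI subxx.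
  apply: (maxH' 'N_G(A)%G _ sHN); rewrite properEneq neNG; exact: subsetIl.
have xG : x \in G := subsetP sNG x Nx.
have sKHx : K \subset H :^ x.
  rewrite -NGA conjIg conjGid // -normJ -K1E subsetI sKG; exact: nK1K.
apply/eqP; rewrite eqEcard sKHx cardJg.
rewrite setIC in tiHN; rewrite setIC in tiKN.
have e1 := TI_cardMg tiKN; have e2 := TI_cardMg tiHN.
rewrite NKG in e1; rewrite NHG e1 in e2.
move/eqP: e2; rewrite (eqn_pmul2l (cardG_gt0 N)) => /eqP ->; exact: leqnn.
Qed.
Lemma key (gT : finGroupType) (G H N : {group gT}) (h n k : gT) :
  solvable G -> N \subset G -> minnormal N G -> abelian N -> maximal H G ->
  N * H = G -> H :&: N = 1 -> 'C_H(N) = 1 ->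
  h \in H -> h != 1 -> n \in N -> k \in H -> <<[set h; k]>> = H ->
  exists2 b, b \in N & <<[set h * n; k * b]>> = G.
Proof.
move=> solG sNG minN abN maxH NHG tiHN cHN Hh nth Nn Hk genH.
have [/andP[ntN nNG] minN'] := mingroupP minN.
have [prHG maxH'] := maxgroupP maxH.
have sHG : H \subset G := proper_sub prHG.
have ntH : H :!=: 1 by apply/trivgPn; exists h.
case: (boolP [exists b in N, <<[set h * n; k * b]>> == G]) =>
  [/exists_inP [b Nb /eqP E] | none]; first by exists b.
exfalso.
have noneb : forall b, b \in N -> <<[set h * n; k * b]>> != G.
  by move=> b Nb; apply: contra none => E; apply/exists_inP; exists b.
have Gh : h \in G := subsetP sHG h Hh.
have Gk : k \in G := subsetP sHG k Hk.
have GN : forall x, x \in N -> x \in G := subsetP sNG.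
have complX : forall b, b \in N ->
    exists2 m, m \in N & <<[set h * n; k * b]>> :=: H :^ m.
  move=> b Nb; pose X := generated_group [set h * n; k * b].
  have sXG : X \subset G.
    by rewrite /X /= gen_subG subUset !sub1set; apply/andP; split; apply: groupM; auto.
  have nNX : X \subset 'N(N) := subset_trans sXG nNG.
  have NX : N * X = G.
    apply/eqP; rewrite eqEsubset mul_subG //= -(norm_joinEr nNX) -{1}NHG.
    rewrite mul_subG ?joing_subl //= -genH gen_subG subUset !sub1set.
    have sNJ := subsetP (joing_subl N X); have sXJ := subsetP (joing_subr N X).
    apply/andP; split.
      suff: h * n * n^-1 \in N <*> X by rewrite mulgK.
      apply: groupM; last by apply: sNJ; rewrite groupV.
      by apply: sXJ; rewrite mem_gen // !inE eqxx.
    suff: k * b * b^-1 \in N <*> X by rewrite mulgK.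
    apply: groupM; last by apply: sNJ; rewrite groupV.
    by apply: sXJ; rewrite mem_gen // !inE eqxx orbT.
  have tiXN : X :&: N = 1.
    case: (eqVneq (X :&: N) 1) => // ntXN; exfalso.
    have nXNG : G \subset 'N(X :&: N).
      rewrite -NX mul_subG //.
        by apply: cents_norm; rewrite centsC; exact: subset_trans (subsetIr X N) abN.
      by rewrite normsI ?normG.
    have := minN' (X :&: N)%G; rewrite /= ntXN nXNG => /(_ isT (subsetIr _ _)) eqXN.
    have sNX : N \subset X by rewrite -eqXN subsetIl.
    move/negP: (noneb b Nb); apply; apply/eqP/eqP; rewrite eqEsubset sXG /= -NX.
    by rewrite mul_subG.
  exact: (conj_compl solG sNG minN abN maxH ntH NHG tiHN cHN sXG tiXN NX).
pose f b := odflt 1 [pick m in N | (h * n \in H :^ m) && (k * b \in H :^ m)].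
have fP : forall b, b \in N -> [/\ f b \in N, h * n \in H :^ f b & k * b \in H :^ f b].
  move=> b Nb; rewrite /f; case: pickP => [m /andP[Nm /andP[h1 h2]] | no] //=.
  exfalso; have [m Nm XE] := complX b Nb; move: (no m).
  by rewrite Nm -XE !mem_gen // !inE eqxx ?orbT.
have HmN : forall m, m \in N -> H :^ m :&: N = 1.
  by move=> m Nm; rewrite -{1}(conjGid Nm) -conjIg tiHN conjs1g.
have finj : {in N &, injective f}.
  move=> b b' Nb Nb' e.
  have [Nf _ kb] := fP b Nb; have [_ _ kb'] := fP b' Nb'.
  rewrite e in kb Nf.
  have : (k * b)^-1 * (k * b') \in H :^ f b' :&: N.
    rewrite inE groupM ?groupV //= invMg -mulgA mulKg groupM ?groupV //.
  by rewrite HmN // => /set1P /eqP; rewrite invMg -mulgA mulKg -eq_mulVg1 => /eqP.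
pose S := [set m in N | h * n \in H :^ m].
have card1 : #|N| <= #|S|.
  rewrite -(card_in_imset finj); apply: subset_leq_card.
  apply/subsetP => _ /imsetP [b Nb ->]; have [? ? ?] := fP b Nb.
  by rewrite inE; apply/andP.
have hnE : forall m, m \in S -> h * n = h ^ m.
  move=> m; rewrite inE => /andP [Nm]; rewrite mem_conjg => Hz.
  have : h^-1 * (h * n) ^ m^-1 \in H :&: N.
    rewrite inE groupM ?groupV //=.
    rewrite conjg_mulR mulgA mulKg groupM //.
    have : [~ h * n, m^-1] \in [~: G, N].
      by apply: mem_commg; [apply: groupM => //; exact: GN | rewrite groupV].
    by apply: subsetP; rewrite commg_subr.
  rewrite tiHN => /set1P /eqP; rewrite -eq_mulVg1 => /eqP hE.
  by rewrite {2}hE conjgKV.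
have m0S : f 1 \in S.
  by have [? ? ?] := fP 1 (group1 N); rewrite inE; apply/andP.
pose m0 := f 1.
have sS : S \subset 'C_N[h] :* m0.
  apply/subsetP => m mS; rewrite mem_rcoset inE.
  have Nm : m \in N by move: mS; rewrite inE => /andP [].
  have Nm0 : m0 \in N by move: m0S; rewrite inE => /andP [].
  rewrite groupM ?groupV //=.
  apply/cent1P; apply/esym/commgP/conjg_fixP.
  by rewrite conjgM -(hnE _ mS) (hnE _ m0S) conjgK.
have prC : 'C_N[h] \proper N.
  rewrite properE subsetIl /=; apply/negP => sNC.
  have : h \in 'C_H(N) by rewrite inE Hh -sub_cent1 (subset_trans sNC) ?subsetIr.
  by rewrite cHN => /set1P /eqP; rewrite (negPf nth).
have e : #|N| <= #|'C_N[h]|.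
  by have := leq_trans card1 (subset_leq_card sS); rewrite card_rcoset.
by move: (leq_ltn_trans e (proper_card prC)); rewrite ltnn.
Qed.

Theorem proposition2p2 (gT : finGroupType) (G H : {group gT}) :
  solvable G -> primitive_monolithic G ->
  maximal H G -> core_free H G ->
  forall h n : gT, h \in H -> h != 1 -> n \in soc G ->
  (h * n \in Vgen G) = (h \in Vgen H).
Proof.
move=> solG [_ [N [/andP [minN sNG] uniqN]]] maxH /andP [_ /eqP cfH] h n Hh nth.
have socE : soc G = N.
  rewrite /soc.
  have -> : \bigcup_(M : {group gT} | minnormal_sub M G) M = N.
    apply/eqP; rewrite eqEsubset; apply/andP; split.
      by apply/bigcupsP => M /uniqN ->.
    by apply: (bigcup_sup N); rewrite /minnormal_sub minN sNG.
  exact: genGid.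
rewrite socE => Nn.
have [_ _ /is_abelemP [p _ abN]] := minnormal_solvable minN sNG solG.
have abN' := abelem_abelian abN.
have [NHG tiHN cHN] := basic_facts sNG minN abN' maxH cfH.
have sHG := proper_sub (maxgroupp maxH).
have [/andP[ntN nNG] _] := mingroupP minN.
have GN := subsetP sNG; have GH := subsetP sHG.
rewrite /Vgen !inE Hh (groupM (GH _ Hh) (GN _ Nn)) /=.
apply/exists_inP/exists_inP.
  case=> y Gy /eqP genG.
  rewrite -NHG in Gy; case/mulsgP: Gy => m y' Nm Hy' yE.
  exists y' => //.
  pose Y := generated_group [set h; y'].
  have sYH : Y \subset H by rewrite /Y /= gen_subG subUset !sub1set Hh Hy'.
  have nNY : Y \subset 'N(N) := subset_trans sYH (subset_trans sHG nNG).
  have sGJ : G \subset N <*> Y.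
    rewrite -genG gen_subG subUset !sub1set yE.
    have sNJ := subsetP (joing_subl N Y); have sYJ := subsetP (joing_subr N Y).
    apply/andP; split; apply: groupM.
    - by apply: sYJ; rewrite /Y /= mem_gen // !inE eqxx.
    - exact: sNJ.
    - exact: sNJ.
    - by apply: sYJ; rewrite /Y /= mem_gen // !inE eqxx orbT.
  have E : H :&: (N * Y) = H.
    by apply/setIidPl; rewrite -(norm_joinEr nNY) (subset_trans sHG).
  rewrite -group_modr // tiHN mul1g in E.
  by rewrite -E.
case=> k Hk /eqP genH.
have [b Nb E] := key solG sNG minN abN' maxH NHG tiHN cHN Hh nth Nn Hk genH.
exists (k * b); first by apply: groupM; [exact: GH | exact: GN].
by rewrite E.
Qed.
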